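(* Let $V$ be a finite set of numeric variables, let $t$ be a linear term over $V$, and let $a \in \mathbb{R} \cup \{-\infty\}$, $b \in \mathbb{R} \cup \{\infty\}$ with $a \leq b$. Let $t' := t[V \mapsto V']$ and $\epsilon > 0$. Define $\mathit{base} := (a \leq t \leq b)$, $\mathit{conc} := \top$, $\mathit{stay} := (a \leq t' \leq b) \lor (t < a \land t \leq t' \leq b) \lor (t > b \land t \geq t' \geq a)$, and $\mathit{step} := (a \leq t' \leq b) \lor (t < a \land t + \epsilon \leq t' \leq b) \lor (t > b \land t - \epsilon \geq t' \geq a)$. Then $(\mathit{base}, \mathit{stay}, \mathit{step}, \mathit{conc})$ is a GAL over $V$.
   Context: The theory $T$ is linear arithmetic. For a set of variables $X$, $\mathcal{A}(X)$ denotes the set of assignments to $X$. $X' = \{x' \mid x \in X\}$ is a disjoint primed copy of $X$; for $\nu \in \mathcal{A}(X)$, $\nu' \in \mathcal{A}(X')$ is given by $\nu'(x') = \nu(x)$; for $\nu_1,\nu_2 \in \mathcal{A}(X)$, $\langle \nu_1,\nu_2\rangle := \nu_1 \uplus \nu_2'$. $\nu \models_T \alpha$ denotes entailment in $T$. $t[V\mapsto V']$ replaces each $v\in V$ by $v'$. A generalized acceleration lemma (GAL) over $V$ is a tuple $(\mathit{base}, \mathit{stay}, \mathit{step}, \mathit{conc})$ of first-order formulas with $\mathit{base}, \mathit{conc}$ having free variables in $V$ and $\mathit{stay}, \mathit{step}$ having free variables in $V \cup V'$, such that: (I) for every sequence $\alpha \in \mathcal{A}(V)^\omega$ with $\alpha[0]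 \models_T \mathit{conc}$, if (a) for all $i$, $\langle\alpha[i],\alpha[i+1]\rangle \models_T \mathit{step} \lor \mathit{stay}$, and (b) for all $i$ there is $j \ge i$ with $\langle\alpha[j],\alpha[j+1]\rangle \models_T \mathit{step}$, then there is $k$ with $\alpha[k] \models_T \mathit{base}$; and (II) for all $\nu,\nu' \in \mathcal{A}(V)$ with $\nu \models_T \mathit{conc}$ and $\langle \nu,\nu'\rangle \models_T \mathit{step}\lor\mathit{stay}$, we have $\nu' \models_T \mathit{conc}$. Comparisons with $\pm\infty$ are interpreted in the extended reals (e.g. $-\infty \le t$ is always true). *)

(* Defs.v *)
From HB Require Import structures.
From mathcomp Require Import all_boot all_order all_algebra.
From mathcomp Require Import reals constructive_ereal.
Set Implicit Arguments. Unset Strict Implicit. Unset Printing Implicit Defensive.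
Import Order.TTheory GRing.Theory Num.Theory.
Local Open Scope ring_scope.

Definition assign (R : realType) (V : finType) := V -> R.

Record lin_term (R : realType) (V : finType) := LinTerm {
  lt_const : R;
  lt_coef : V -> R }.

Definition eval_term (R : realType) (V : finType) (t : lin_term R V)
  (nu : assign R V) : R :=
  lt_const t + \sum_(v : V) lt_coef t v * nu v.

(* Formulas are represented semantically:
   formulas over V are predicates on assignments of V;
   formulas over V u V' are predicates on the pair <nu1, nu2>
   (nu1 assigns V, nu2 assigns the primed copy V').
   Hence the primed term t' = t[V -> V'] evaluates on <nu1,nu2> to
   eval_term t nu2. *)
Definition formV (R : realType) (V : finType) := assign R V -> Prop.
Definition formVV (R : realType) (V : finType) := assign R V -> assign R V -> Prop.

Definition is_GAL (R : realType) (V : finType)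
  (base : formV R V) (stay step : formVV R V) (conc : formV R V) : Prop :=
  (forall alpha : nat -> assign R V,
      conc (alpha 0%N) ->
      (forall i : nat, step (alpha i) (alpha i.+1) \/ stay (alpha i) (alpha i.+1)) ->
      (forall i : nat, exists j : nat, (i <= j)%N /\ step (alpha j) (alpha j.+1)) ->
      exists k : nat, base (alpha k))
  /\
  (forall nu nu' : assign R V,
      conc nu -> (step nu nu' \/ stay nu nu') -> conc nu').

Local Open Scope ereal_scope.

Definition base5 (R : realType) (V : finType) (t : lin_term R V)
  (a b : \bar R) : formV R V :=
  fun nu => a <= (eval_term t nu)%:E /\ (eval_term t nu)%:E <= b.

Definition conc5 (R : realType) (V : finType) : formV R V := fun _ => True.

Definition stay5 (R : realType) (V : finType) (t : lin_term R V)
  (a b : \bar R) : formVV R V :=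
  fun nu nu' =>
    let x := eval_term t nu in let y := eval_term t nu' in
    (a <= y%:E /\ y%:E <= b)
    \/ (x%:E < a /\ (x <= y)%R /\ y%:E <= b)
    \/ (b < x%:E /\ (y <= x)%R /\ a <= y%:E).

Definition step5 (R : realType) (V : finType) (t : lin_term R V)
  (a b : \bar R) (eps : R) : formVV R V :=
  fun nu nu' =>
    let x := eval_term t nu in let y := eval_term t nu' in
    (a <= y%:E /\ y%:E <= b)
    \/ (x%:E < a /\ (x + eps <= y)%R /\ y%:E <= b)
    \/ (b < x%:E /\ (y <= x - eps)%R /\ a <= y%:E).

(* Main.v *)
Require Import Defs.
From HB Require Import structures.
From mathcomp Require Import all_boot all_order all_algebra.
From mathcomp Require Import reals constructive_ereal.
From mathcomp Require Import lra.
Import Order.TTheory GRing.Theory Num.Theory.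
Local Open Scope ring_scope.
From Stdlib Require Import Classical.
Set Implicit Arguments.

Section H.
Variable R : realType.
Implicit Types (a b : \bar R) (x y eps : R).

Lemma notin_lt a b y : ~ ((a <= y%:E)%E /\ (y%:E <= b)%E) ->
  (y%:E < a)%E \/ (b < y%:E)%E.
Proof.
move=> H; case: (leP a y%:E) => h1; last by left.
case: (leP y%:E b) => h2; last by right.
by exfalso; apply: H.
Qed.

Lemma tr_lo a b eps x y : (a <= b)%E -> 0 < eps ->
  ~ ((a <= y%:E)%E /\ (y%:E <= b)%E) -> (x%:E < a)%E ->
  ((a <= y%:E /\ y%:E <= b)
    \/ (x%:E < a /\ (x + eps <= y)%R /\ y%:E <= b)
    \/ (b < x%:E /\ (y <= x - eps)%R /\ a <= y%:E))%E ->
  x + eps <= y /\ (y%:E < a)%E.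
Proof.
move=> hab he Hy hx [H|[[_ [h1 h2]]|[h1 _]]]; first by exfalso.
  split=> //; case: (notin_lt _ _ _ Hy) => // h3.
  by move: (lt_le_trans h3 h2); rewrite ltxx.
by move: (lt_trans h1 (lt_le_trans hx hab)); rewrite ltxx.
Qed.

Lemma tr_lo' a b x y : (a <= b)%E ->
  ~ ((a <= y%:E)%E /\ (y%:E <= b)%E) -> (x%:E < a)%E ->
  ((a <= y%:E /\ y%:E <= b)
    \/ (x%:E < a /\ (x <= y)%R /\ y%:E <= b)
    \/ (b < x%:E /\ (y <= x)%R /\ a <= y%:E))%E ->
  x <= y /\ (y%:E < a)%E.
Proof.
move=> hab Hy hx [H|[[_ [h1 h2]]|[h1 _]]]; first by exfalso.
  split=> //; case: (notin_lt _ _ _ Hy) => // h3.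
  by move: (lt_le_trans h3 h2); rewrite ltxx.
by move: (lt_trans h1 (lt_le_trans hx hab)); rewrite ltxx.
Qed.

Lemma tr_hi a b eps x y : (a <= b)%E -> 0 < eps ->
  ~ ((a <= y%:E)%E /\ (y%:E <= b)%E) -> (b < x%:E)%E ->
  ((a <= y%:E /\ y%:E <= b)
    \/ (x%:E < a /\ (x + eps <= y)%R /\ y%:E <= b)
    \/ (b < x%:E /\ (y <= x - eps)%R /\ a <= y%:E))%E ->
  y <= x - eps /\ (b < y%:E)%E.
Proof.
move=> hab he Hy hx [H|[[h1 _]|[_ [h1 h2]]]]; first by exfalso.
  by move: (lt_trans h1 (le_lt_trans hab hx)); rewrite ltxx.
split=> //; case: (notin_lt _ _ _ Hy) => // h3.
by move: (le_lt_trans h2 h3); rewrite ltxx.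
Qed.

Lemma tr_hi' a b x y : (a <= b)%E ->
  ~ ((a <= y%:E)%E /\ (y%:E <= b)%E) -> (b < x%:E)%E ->
  ((a <= y%:E /\ y%:E <= b)
    \/ (x%:E < a /\ (x <= y)%R /\ y%:E <= b)
    \/ (b < x%:E /\ (y <= x)%R /\ a <= y%:E))%E ->
  y <= x /\ (b < y%:E)%E.
Proof.
move=> hab Hy hx [H|[[h1 _]|[_ [h1 h2]]]]; first by exfalso.
  by move: (lt_trans h1 (le_lt_trans hab hx)); rewrite ltxx.
split=> //; case: (notin_lt _ _ _ Hy) => // h3.
by move: (le_lt_trans h2 h3); rewrite ltxx.
Qed.
End H.
Arguments notin_lt {R a b y}.
Arguments tr_lo {R a b eps x y}.
Arguments tr_lo' {R a b x y}.
Arguments tr_hi {R a b eps x y}.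
Arguments tr_hi' {R a b x y}.
Lemma unb (R: realType) (eps: R) (u : nat -> R) (c : R) : 0 < eps ->
  (forall i, u i <= u i.+1) ->
  (forall i, exists j, (i<=j)%N /\ u j + eps <= u j.+1) ->
  (forall i, u i < c) -> False.
Proof.
move=> he mono stp bnd.
have mon : forall i k, u i <= u (i + k)%N.
  move=> i; elim=> [|k IH]; first by rewrite addn0.
  by apply: le_trans IH _; rewrite addnS.
have grow : forall n : nat, exists j, u 0%N + n%:R * eps <= u j.
  elim=> [|n [j Hj]]; first by exists 0%N; rewrite mul0r addr0.
  have [j' [Hjj' Hs]] := stp j.
  exists j'.+1.
  have := mon j (j' - j)%N; rewrite subnKC //.
  move=> Hm.
  rewrite -natr1 mulrDl mul1r; lra.
have [n Hn] := grow (Num.bound (`|c - u 0%N| / eps)).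
have := archi_boundP (divr_ge0 (normr_ge0 (c - u 0%N)) (ltW he)).
rewrite ltr_pdivrMr //.
have := ler_norm (c - u 0%N).
have := bnd n.
lra.
Qed.

Unset Implicit Arguments.

Theorem lemma5 (R : realType) (V : finType) (t : lin_term R V)
  (a b : \bar R) (eps : R)
  (ha : a != +oo%E) (hb : b != -oo%E) (hab : (a <= b)%E) (heps : 0 < eps) :
  is_GAL (base5 t a b) (stay5 t a b) (step5 t a b eps) (@conc5 R V).
Proof.
split; last by [].
move=> alpha _ Htr Hinf.
apply: NNPP => Hno.
have Hout : forall k, ~ ((a <= (eval_term t (alpha k))%:E)%E /\
                         ((eval_term t (alpha k))%:E <= b)%E).
  by move=> k Hk; apply: Hno; exists k.
pose x i := eval_term t (alpha i).
case: (notin_lt (Hout 0%N)) => h0.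
- have inv : forall i, ((x i)%:E < a)%E.
    elim=> [|i IH] //.
    case: (Htr i) => H.
    + exact: (tr_lo hab heps (Hout i.+1) IH H).2.
    + exact: (tr_lo' hab (Hout i.+1) IH H).2.
  have mono : forall i, x i <= x i.+1.
    move=> i; case: (Htr i) => H.
    + have := (tr_lo hab heps (Hout i.+1) (inv i) H).1; rewrite /x; lra.
    + exact: (tr_lo' hab (Hout i.+1) (inv i) H).1.
  have stp : forall i, exists j, (i <= j)%N /\ x j + eps <= x j.+1.
    move=> i; have [j [hj H]] := Hinf i; exists j; split=> //.
    exact: (tr_lo hab heps (Hout j.+1) (inv j) H).1.
  have [ra Ea] : exists ra, a = ra%:E.
    by move: ha h0; clear; case: a => [r| |] //= _ _; exists r.
  apply: (@unb R eps x ra heps mono stp) => i.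
  by have := inv i; rewrite Ea lte_fin.
- have inv : forall i, (b < (x i)%:E)%E.
    elim=> [|i IH] //.
    case: (Htr i) => H.
    + exact: (tr_hi hab heps (Hout i.+1) IH H).2.
    + exact: (tr_hi' hab (Hout i.+1) IH H).2.
  have mono : forall i, - x i <= - x i.+1.
    move=> i; case: (Htr i) => H.
    + have := (tr_hi hab heps (Hout i.+1) (inv i) H).1; rewrite /x; lra.
    + have := (tr_hi' hab (Hout i.+1) (inv i) H).1; rewrite /x; lra.
  have stp : forall i, exists j, (i <= j)%N /\ - x j + eps <= - x j.+1.
    move=> i; have [j [hj H]] := Hinf i; exists j; split=> //.
    have := (tr_hi hab heps (Hout j.+1) (inv j) H).1; rewrite /x; lra.
  have [rb Eb] : exists rb, b = rb%:E.
    by move: hb h0; clear; case: b => [r| |] //= _ _; exists r.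
  apply: (@unb R eps (fun i => - x i) (- rb) heps mono stp) => i /=.
  by have := inv i; rewrite Eb lte_fin ltrN2.
Qed.
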